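(* Let $A\in\mathbb{R}^{n\times n}$, $B\in\mathbb{R}^n$, $n\ge2$. For $k=1,\dots,n-1$ let $\mathrm{an}_k\in\mathbb{R}^{(n-k)\times(n-k+1)}$ have full row rank $n-k$, and set $M_k=\mathrm{an}_k\mathrm{an}_{k-1}\cdots\mathrm{an}_1\in\mathbb{R}^{(n-k)\times n}$, $B_0=B$, $B_k=M_kA^kB$; assume $\mathrm{an}_kB_{k-1}=0$ for each $k$ (equivalently $M_kA^{k-1}B=0$). If $(A,B)$ is controllable, then for every $k=0,1,\dots,n-1$ the vectors $M_kA^kB,\,M_kA^{k+1}B,\dots,M_kA^{n-1}B$ (with $M_0=I_n$) are linearly independent, i.e. span a space of dimension $n-k$; in particular $B_k\neq0$ for all $k$. Equivalently, if $B_k=0$ for some $k$, then $\operatorname{rank}(B\;AB\;\cdots\;A^{n-1}B)<n$.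
   Context: $(A,B)$ controllable means the controllability matrix $(B\;AB\;\cdots\;A^{n-1}B)$ has rank $n$. *)

(* Defs.v *)
From HB Require Import structures.
From mathcomp Require Import all_boot all_order all_algebra.
From mathcomp Require Import all_reals.
Set Implicit Arguments. Unset Strict Implicit. Unset Printing Implicit Defensive.
Import Order.TTheory GRing.Theory Num.Theory.
Local Open Scope ring_scope.

Definition ctrbmx (R : pzRingType) (n : nat) (A : 'M[R]_n) (B : 'cV[R]_n)
  : 'M[R]_(n, n) := \matrix_(i < n, j < n) (A ^+ j *m B) i ord0.

Definition controllable (R : fieldType) (n : nat) (A : 'M[R]_n) (B : 'cV[R]_n)
  : bool := \rank (ctrbmx A B) == n.

(* an k (k = 0, ..., n-2) represents the paper's an_{k+1},
   of size (n-(k+1)) x (n-k).  Mk an k is the paper's M_k = an_k ... an_1,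
   of size (n-k) x n, with M_0 = I_n. *)
Fixpoint Mk (R : pzRingType) (n : nat)
  (an : forall k : nat, 'M[R]_(n - k.+1, n - k)) (k : nat) : 'M[R]_(n - k, n) :=
  match k with
  | 0 => castmx (esym (subn0 n), erefl n) (1%:M : 'M[R]_n)
  | k'.+1 => an k' *m Mk an k'
  end.

Definition Bk (R : pzRingType) (n : nat) (A : 'M[R]_n) (B : 'cV[R]_n)
  (an : forall k : nat, 'M[R]_(n - k.+1, n - k)) (k : nat) : 'cV[R]_(n - k) :=
  Mk an k *m (A ^+ k *m B).

Definition reduced_ctrbmx (R : pzRingType) (n : nat) (A : 'M[R]_n) (B : 'cV[R]_n)
  (an : forall k : nat, 'M[R]_(n - k.+1, n - k)) (k : nat) : 'M[R]_(n - k, n - k) :=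
  \matrix_(i < n - k, j < n - k) (Mk an k *m (A ^+ (k + j) *m B)) i ord0.

(* Main.v *)
Require Import Defs.
From HB Require Import structures.
From mathcomp Require Import all_boot all_order all_algebra.
From mathcomp Require Import all_reals.
From mathcomp Require Import zify.
Import Order.TTheory GRing.Theory Num.Theory.
Local Open Scope ring_scope.

Lemma rank_castmx (F : fieldType) m n m' n' (e : (m = m') * (n = n')) (M : 'M[F]_(m, n)) :
  \rank (castmx e M) = \rank M.
Proof. case: e => e1 e2; case: m' / e1; case: n' / e2; by rewrite castmx_id. Time Qed.

Lemma castL (R : pzRingType) n m p (e : n = m) (v : 'M[R]_(n, p)) :
  castmx (e, erefl n) (1%:M : 'M[R]_n) *m v = castmx (e, erefl p) v.
Proof. by case: m / e; rewrite !castmx_id mul1mx. Time Qed.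

Lemma col_mul (R : pzRingType) m n p (X : 'M[R]_(m, n)) (Y : 'M[R]_(n, p)) i :
  col i (X *m Y) = X *m col i Y.
Proof. by apply/colP => x; rewrite !mxE; apply: eq_bigr => l _; rewrite mxE. Time Qed.

Lemma col_red (R : pzRingType) (n : nat) (A : 'M[R]_n) (B : 'cV[R]_n)
  (an : forall k : nat, 'M[R]_(n - k.+1, n - k)) k (i : 'I_(n - k)) :
  col i (reduced_ctrbmx A B an k) = Mk an k *m (A ^+ (k + i) *m B).
Proof. by apply/colP => x; rewrite !mxE. Time Qed.

Lemma red0 (R : fieldType) (n : nat) (A : 'M[R]_n) (B : 'cV[R]_n)
  (an : forall k : nat, 'M[R]_(n - k.+1, n - k)) :
  reduced_ctrbmx A B an 0 = castmx (esym (subn0 n), esym (subn0 n)) (ctrbmx A B).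
Proof.
apply/matrixP => i j; rewrite castmxE [LHS]mxE /= castL castmxE [RHS]mxE /= add0n.
by congr (_ _ _); apply: val_inj.
Qed.

Lemma red_base (R : realType) (n : nat) (A : 'M[R]_n) (B : 'cV[R]_n)
  (an : forall k : nat, 'M[R]_(n - k.+1, n - k)) :
  controllable A B -> \rank (reduced_ctrbmx A B an 0) = (n - 0)%N.
Proof. by move=> ctr; rewrite red0 rank_castmx (eqP ctr) subn0. Time Qed.

Lemma red_col_sub (R : realType) (n : nat) (A : 'M[R]_n) (B : 'cV[R]_n)
  (an : forall k : nat, 'M[R]_(n - k.+1, n - k)) k (i : 'I_(n - k)) :
  an k *m Bk A B an k = 0 ->
  ((an k *m (Mk an k *m (A ^+ (k + i) *m B)))^T <= (reduced_ctrbmx A B an k.+1)^T)%MS.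
Proof.
move=> ann.
case: i => [[|j] ij] /=.
  by rewrite addn0 ann trmx0 sub0mx.
have jl : (j < n - k.+1)%N by rewrite subnS -ltnS prednK // (leq_ltn_trans _ ij).
have -> : an k *m (Mk an k *m (A ^+ (k + j.+1) *m B))
   = col (Ordinal jl) (reduced_ctrbmx A B an k.+1).
  by rewrite col_red /= !mulmxA addSn addnS.
rewrite tr_col; exact: (row_sub (Ordinal jl) (reduced_ctrbmx A B an k.+1)^T).
Qed.

Lemma rk_all (R : realType) (n : nat) (A : 'M[R]_n) (B : 'cV[R]_n)
  (an : forall k : nat, 'M[R]_(n - k.+1, n - k)) :
  (forall k : nat, (k < n.-1)%N -> row_free (an k)) ->
  (forall k : nat, (k < n.-1)%N -> an k *m Bk A B an k = 0) ->
  controllable A B ->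
  forall k, (k < n)%N -> \rank (reduced_ctrbmx A B an k) = (n - k)%N.
Proof.
move=> free ann ctr.
elim=> [_|k IH kn]; first exact: red_base.
have kn' : (k < n.-1)%N by lia.
apply/eqP; rewrite eqn_leq rank_leq_row /=.
set C := reduced_ctrbmx A B an k.
have Cf : row_free C by rewrite /row_free IH //; lia.
have E : \rank (an k *m C) = (n - k.+1)%N.
  by rewrite mxrankMfree //; apply/eqP; apply: free.
apply: leq_trans (eq_leq (esym E)) _.
rewrite -mxrank_tr -(mxrank_tr (reduced_ctrbmx A B an k.+1)).
apply: mxrankS; apply/row_subP => i.
rewrite -tr_col col_mul col_red.
by apply: red_col_sub; apply: ann.
Qed.

Lemma bk_nz (R : realType) (n : nat) (A : 'M[R]_n) (B : 'cV[R]_n)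
  (an : forall k : nat, 'M[R]_(n - k.+1, n - k)) k :
  (k < n)%N -> \rank (reduced_ctrbmx A B an k) = (n - k)%N -> Bk A B an k != 0.
Proof.
move=> kn rk.
have k0 : (0 < n - k)%N by lia.
set C := reduced_ctrbmx A B an k.
have -> : Bk A B an k = col (Ordinal k0) C by rewrite col_red addn0.
have CTf : row_free C^T by rewrite /row_free mxrank_tr rk.
rewrite -(inj_eq (@trmx_inj _ _ _)) tr_col trmx0 rowE mulmx_free_eq0 //.
apply/negP => /eqP/matrixP/(_ 0 (Ordinal k0)); rewrite !mxE !eqxx /=.
by move/eqP; rewrite oner_eq0.
Qed.

Theorem mainTheorem12 (R : realType) (n : nat) (A : 'M[R]_n) (B : 'cV[R]_n)
  (an : forall k : nat, 'M[R]_(n - k.+1, n - k)) :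
  (2 <= n)%N ->
  (forall k : nat, (k < n.-1)%N -> row_free (an k)) ->
  (forall k : nat, (k < n.-1)%N -> an k *m Bk A B an k = 0) ->
  controllable A B ->
  forall k : nat, (k < n)%N ->
    \rank (reduced_ctrbmx A B an k) = (n - k)%N /\ Bk A B an k != 0.
Proof.
move=> n2 free ann ctr k kn.
have rk := @rk_all R n A B an free ann ctr k kn.
by split; [|apply: bk_nz].
Qed.
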